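(* Let $H=\bigcup_i K_{n_i}$ be a disjoint union of complete graphs with all $n_i\ge 1$. Then for every connected graph $G$, $\mathrm{gp}(G\odot H)=\omega((G\odot H)_{\rm SR})$.
   Context: All graphs are finite and simple. For a connected graph $G$, $d_G(u,v)$ is the distance, and a geodesic is a shortest path. A set $S\subseteq V(G)$ is a general position set if no three pairwise distinct vertices of $S$ lie on a common geodesic; $\mathrm{gp}(G)$ is the maximum cardinality of a general position set. A vertex $u$ is maximally distant from $v$ if every neighbor $w$ of $u$ satisfies $d_G(v,w)\le d_G(u,v)$; $u,v$ are mutually maximally distant (MMD) if each is maximally distant from the other. The strong resolving graph $G_{\rm SR}$ has vertex set $V(G)$, distinct vertices adjacent iff MMD in $G$. $\omega$ is the clique number. The corona $G\odot H$, for $V(G)=\{v_1,\dots,v_n\}$, is obtained from the disjoint union of $G$ and $n$ disjoint copies $H_1,\dots,H_n$ of $H$ by joining $v_i$ to every vertex of $H_i$, for each $i$. *)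

(* Defs.v *)
From mathcomp Require Import all_boot.
Set Implicit Arguments. Unset Strict Implicit. Unset Printing Implicit Defensive.

Section Graphs.
Variable T : finType.
Variable e : rel T.

Definition simple_graph : Prop := symmetric e /\ irreflexive e.

Definition connected_graph : Prop := 0 < #|T| /\ forall x y : T, connect e x y.

Definition walkb (x y : T) (k : nat) : bool :=
  [exists p : k.-tuple T, path e x p && (last x p == y)].

(* distance: least k with a walk of length k (#|T| if unreachable) *)
Definition dist (x y : T) : nat := find (walkb x y) (iota 0 #|T|).

Definition geodesic (x : T) (p : seq T) : bool :=
  path e x p && (size p == dist x (last x p)).

(* a, b, c lie on a common geodesic (geodesics have at most #|T| edges) *)
Definition on_common_geodesic (a b c : T) : bool :=
  [exists x : T, [exists k : 'I_#|T|.+1, [exists p : k.-tuple T,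
     geodesic x p && [&& a \in x :: p, b \in x :: p & c \in x :: p]]]].

Definition gp_set (S : {set T}) : bool :=
  [forall a in S, forall b in S, forall c in S,
     [&& a != b, b != c & a != c] ==> ~~ on_common_geodesic a b c].

Definition gp : nat := \max_(S : {set T} | gp_set S) #|S|.

Definition max_distant (u v : T) : bool :=
  [forall w, e u w ==> (dist v w <= dist u v)].

Definition mmd (u v : T) : bool := max_distant u v && max_distant v u.

Definition strong_resolving : rel T := fun u v => (u != v) && mmd u v.

Definition is_clique (S : {set T}) : bool :=
  [forall x in S, forall y in S, (x != y) ==> e x y].

Definition clique_number : nat := \max_(S : {set T} | is_clique S) #|S|.
End Graphs.

(* corona G ⊙ H: vertex inl v = v in G, inr (v, u) = vertex u of the copy H_v *)
Definition corona (T U : finType) (eG : rel T) (eH : rel U) : rel (T + (T * U)) :=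
  fun a b => match a, b with
  | inl x, inl y => eG x y
  | inl x, inr (v, _) => x == v
  | inr (v, _), inl x => x == v
  | inr (v, u), inr (v', u') => (v == v') && eH u u'
  end.

(* H is a (nonempty) disjoint union of complete graphs K_{n_i}, n_i >= 1:
   vertices are partitioned into blocks (labelled by f), each block a clique,
   no edges between blocks. *)
Definition disjoint_union_of_complete_graphs (U : finType) (eH : rel U) : Prop :=
  0 < #|U| /\ exists f : U -> nat, forall u v, eH u v = (u != v) && (f u == f v).

(* Main.v *)
Require Import Defs.
From mathcomp Require Import all_boot zify.
Set Implicit Arguments. Unset Strict Implicit. Unset Printing Implicit Defensive.

Lemma walkbP (T : finType) (e : rel T) x y k :
  reflect (exists p, [/\ path e x p, last x p = y & size p = k]) (walkb e x y k).
Proof.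
apply: (iffP existsP) => [[p /andP[pp /eqP lp]] | [p [pp lp sp]]].
  by exists (val p); rewrite size_tuple.
subst k; exists (in_tuple p); by rewrite /= pp lp eqxx.
Qed.

Lemma dist_le (T : finType) (e : rel T) x y p :
  path e x p -> last x p = y -> dist e x y <= size p.
Proof.
move=> pp lp; rewrite /dist.
case: (ltnP (size p) #|T|) => h.
  rewrite leqNgt; apply/negP => lt.
  have := before_find 0 lt; rewrite nth_iota // add0n.
  by move/negbT/negP; apply; apply/walkbP; exists p.
by apply: leq_trans (find_size _ _) _; rewrite size_iota.
Qed.

Lemma dist_ub (T : finType) (e : rel T) x y : dist e x y <= #|T|.
Proof. by apply: leq_trans (find_size _ _) _; rewrite size_iota. Qed.

Lemma short_walk (T : finType) (e : rel T) (conn : forall x y, connect e x y) x y :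
  exists p, [/\ path e x p, last x p = y & size p < #|T|].
Proof.
case/connectP: (conn x y) => p pp ->.
case: (shortenP pp) => p' pp' up' _.
exists p'; split => //.
have := max_card (mem (x :: p')).
by rewrite (card_uniqP up') /=.
Qed.

Lemma dist_walk (T : finType) (e : rel T) (conn : forall x y, connect e x y) x y :
  exists p, [/\ path e x p, last x p = y & size p = dist e x y].
Proof.
have [p [pp lp sp]] := short_walk conn x y.
have hs : has (walkb e x y) (iota 0 #|T|).
  by apply/hasP; exists (size p); [rewrite mem_iota | apply/walkbP; exists p].
have := nth_find 0 hs; rewrite -/(dist e x y).
have := hs; rewrite has_find size_iota => hlt.
by rewrite nth_iota // add0n => /walkbP.
Qed.

Lemma rev_walk (T : finType) (e : rel T) (sym : symmetric e) x p :
  path e x p -> exists q, [/\ path e (last x p) q, last (last x p) q = x & size q = size p].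
Proof.
move=> pp; exists (rev (belast x p)); split.
- rewrite rev_path; apply: sub_path pp => a b; by rewrite sym.
- case/lastP: p pp => [|q z] //= _.
  by rewrite belast_rcons rev_cons last_rcons.
- by rewrite size_rev size_belast.
Qed.

Lemma dist_sym (T : finType) (e : rel T) (sym : symmetric e)
  (conn : forall x y, connect e x y) x y : dist e x y = dist e y x.
Proof.
suff H : forall a b, dist e a b <= dist e b a.
  by apply/eqP; rewrite eqn_leq !H.
move=> a b; have [p [pp lp <-]] := dist_walk conn b a.
have [q [pq lq sq]] := rev_walk sym pp.
rewrite lp in pq lq; rewrite -sq; exact: dist_le pq lq.
Qed.

Lemma dist_refl (T : finType) (e : rel T) x : dist e x x = 0.
Proof. by apply/eqP; rewrite -leqn0 (dist_le (p := [::])). Qed.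

Lemma dist0 (T : finType) (e : rel T) (conn : forall x y, connect e x y) x y :
  dist e x y = 0 -> x = y.
Proof.
have [p [pp lp sp]] := dist_walk conn x y.
rewrite -sp; case: p pp lp sp => //= _ <-.
Qed.

Lemma dist_edge (T : finType) (e : rel T) x y : e x y -> dist e x y <= 1.
Proof. by move=> h; rewrite (dist_le (p := [:: y])) //= h. Qed.

Lemma dist1 (T : finType) (e : rel T) (conn : forall x y, connect e x y) x y :
  dist e x y = 1 -> e x y.
Proof.
have [p [pp lp sp]] := dist_walk conn x y.
rewrite -sp; case: p pp lp sp => [|a [|b q]] //= /andP[h _] <- //.
Qed.

Lemma dist_tri (T : finType) (e : rel T) (conn : forall x y, connect e x y) x y z :
  dist e x z <= dist e x y + dist e y z.
Proof.
have [p [pp lp <-]] := dist_walk conn x y.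
have [q [pq lq <-]] := dist_walk conn y z.
rewrite -size_cat; apply: dist_le.
  by rewrite cat_path pp lp pq.
by rewrite last_cat lp.
Qed.

Definition simplicial (T : finType) (e : rel T) (u : T) : bool :=
  [forall w1, forall w2, [&& e u w1, e u w2 & w1 != w2] ==> e w1 w2].

Lemma simplicialP (T : finType) (e : rel T) u w1 w2 :
  simplicial e u -> e u w1 -> e u w2 -> w1 != w2 -> e w1 w2.
Proof.
by move=> /forallP/(_ w1)/forallP/(_ w2)/implyP h a b c; apply: h; rewrite a b c.
Qed.

Lemma simp_maxd (T : finType) (e : rel T) (sym : symmetric e)
  (conn : forall x y, connect e x y) u v :
  simplicial e u -> v != u -> max_distant e u v.
Proof.
move=> su vu; apply/forallP => w; apply/implyP => euw.
rewrite (dist_sym sym conn u v).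
have [p [pp lp sp]] := dist_walk conn v u.
case/lastP: p pp lp sp => [|q z]; first by move=> _ /= lv; rewrite lv eqxx in vu.
rewrite rcons_path last_rcons size_rcons => /andP[pq ey] ez sp; subst z.
have dy : dist e v (last v q) <= size q by apply: dist_le pq _.
case: (eqVneq (last v q) w) => [<-|ne]; first by rewrite -sp ltnW.
have eyw : e (last v q) w by apply: (simplicialP su) => //; rewrite sym.
apply: leq_trans (dist_tri conn v (last v q) w) _.
rewrite -sp -addn1 leq_add // dist_edge //.
Qed.

Lemma geodesic_short (T : finType) (e : rel T) x p q :
  geodesic e x p -> path e x q -> last x q = last x p -> size p <= size q.
Proof.
by case/andP => _ /eqP ->; apply: dist_le.
Qed.

Lemma simp_no_interior (T : finType) (e : rel T) (sym : symmetric e) x p1 m p2 :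
  geodesic e x (p1 ++ m :: p2) -> p2 != [::] -> simplicial e m -> False.
Proof.
move=> g; have := g; case/andP=> pp _.
case: p2 g pp => // z p2 g pp _ sm.
move: pp; rewrite cat_path /= => /and3P[pp1 eym /andP[emz pz]].
case: (eqVneq (last x p1) z) => [eq|ne].
  have := geodesic_short g (q := p1 ++ p2).
  rewrite cat_path pp1 eq pz last_cat eq !last_cat /= size_cat /= => /(_ isT erefl).
  rewrite size_cat; lia.
have eyz : e (last x p1) z by apply: (simplicialP sm) => //; rewrite sym.
have := geodesic_short g (q := p1 ++ z :: p2).
rewrite cat_path pp1 /= eyz pz !last_cat /= size_cat /= => /(_ isT erefl).
rewrite /= size_cat /=; lia.
Qed.

Lemma simp_gp3 (T : finType) (e : rel T) (sym : symmetric e) a b c :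
  simplicial e a -> simplicial e b -> simplicial e c ->
  [&& a != b, b != c & a != c] -> ~~ on_common_geodesic e a b c.
Proof.
move=> sa sb sc /and3P[ab bc ac].
apply/negP => /existsP[x /existsP[k /existsP[p /andP[g /and3P[ha hb hc]]]]].
set l := last x p.
have [m [mx ml mp sm]] : exists m, [/\ m != x, m != l, m \in x :: val p & simplicial e m].
  case: (boolP ((a != x) && (a != l))) => [/andP[]|ha']; first by exists a.
  case: (boolP ((b != x) && (b != l))) => [/andP[]|hb']; first by exists b.
  case: (boolP ((c != x) && (c != l))) => [/andP[]|hc']; first by exists c.
  exfalso; move: ab bc ac; move: ha' hb' hc'; rewrite !negb_and !negbK.
  by move=> /orP[]/eqP-> /orP[]/eqP-> /orP[]/eqP->; rewrite ?eqxx.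
move: mp; rewrite inE (negbTE mx) /= => mp.
move: g ml; rewrite /l; case/splitPr: mp => p1 p2 g ml.
apply: (simp_no_interior sym g _ sm).
by apply/eqP => p2e; move: ml; rewrite p2e last_cat /= eqxx.
Qed.

Lemma on_geo_intro (V : finType) (e : rel V) x p a b c :
  geodesic e x p -> a \in x :: p -> b \in x :: p -> c \in x :: p ->
  on_common_geodesic e a b c.
Proof.
move=> g ha hb hc.
have hs : size p < #|V|.+1 by have := g; case/andP => _ /eqP ->; rewrite ltnS dist_ub.
apply/existsP; exists x; apply/existsP; exists (Ordinal hs); apply/existsP.
by exists (in_tuple p); rewrite /= g ha hb hc.
Qed.

Lemma nonsimp_witness (V : finType) (e : rel V) a :
  ~~ simplicial e a -> exists w1 w2, [/\ e a w1, e a w2, w1 != w2 & ~~ e w1 w2].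
Proof.
case/forallPn => w1 /forallPn [w2]; rewrite negb_imply => /andP[/and3P[h1 h2 h3] h4].
by exists w1, w2.
Qed.

Lemma simp_nbr_nonsimp (V : finType) (e : rel V) (sym : symmetric e)
  (conn : forall x y, connect e x y) v a :
  simplicial e v -> e v a -> ~~ simplicial e a -> ~~ max_distant e a v.
Proof.
move=> sv eva /nonsimp_witness [w1 [w2 [e1 e2 ne nadj]]].
have [w [ew wv nvw]] : exists w, [/\ e a w, w != v & ~~ e v w].
  case: (boolP ((w1 != v) && ~~ e v w1)) => [/andP[]|h1]; first by exists w1.
  case: (boolP ((w2 != v) && ~~ e v w2)) => [/andP[]|h2]; first by exists w2.
  exfalso; move: h1 h2; rewrite !negb_and !negbK => h1 h2.
  case: (eqVneq w1 v) h1 => [E1 _|n1 /= ev1].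
    subst w1; move: h2; rewrite eq_sym (negbTE ne) /= => ev2.
    by rewrite ev2 in nadj.
  case: (eqVneq w2 v) h2 => [E2 _|n2 /= ev2].
    by subst w2; rewrite sym ev1 in nadj.
  by rewrite (simplicialP sv ev1 ev2 ne) in nadj.
apply/forallPn; exists w; rewrite negb_imply ew /= -ltnNge.
have h1 : dist e a v <= 1 by apply: dist_edge; rewrite sym.
apply: leq_ltn_trans h1 _.
case d: (dist e v w) => [|[|n]] //.
  by move/(dist0 conn): d => E; rewrite E eqxx in wv.
by move/(dist1 conn): d => E; rewrite E in nvw.
Qed.

Definition Hf (U : finType) (eH : rel U) (f : U -> nat) := forall u v, eH u v = (u != v) && (f u == f v).

Lemma corona_sym (T U : finType) (eG : rel T) (eH : rel U) f :
  symmetric eG -> Hf eH f -> symmetric (corona eG eH).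
Proof.
move=> sG hf [x|[x u]] [y|[y v]] //=; try exact: sG.
by rewrite !hf [y == _]eq_sym [f v == _]eq_sym [v == _]eq_sym.
Qed.

Lemma corona_irr (T U : finType) (eG : rel T) (eH : rel U) f :
  irreflexive eG -> Hf eH f -> irreflexive (corona eG eH).
Proof. by move=> iG hf [x|[x u]] /=; [apply: iG | rewrite hf !eqxx]. Qed.

Definition base (T U : finType) (a : T + T * U) : T := match a with inl x => x | inr (x, _) => x end.

Lemma corona_conn (T U : finType) (eG : rel T) (eH : rel U) :
  (forall x y, connect eG x y) -> forall a b, connect (corona eG eH) a b.
Proof.
move=> cG.
have ll : forall x y, connect (corona eG eH) (inl x) (inl y).
  move=> x y; case/connectP: (cG x y) => p pp ->.
  apply/connectP; exists (map inl p); last by rewrite last_map.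
  by elim: p x pp => //= a p IH x /andP[h /IH ->]; rewrite andbT.
have toL : forall a, connect (corona eG eH) a (inl (base a)).
  by case=> [x|[x u]]; [exact: connect0 | apply: connect1 => /=].
have fromL : forall a, connect (corona eG eH) (inl (base a)) a.
  by case=> [x|[x u]]; [exact: connect0 | apply: connect1 => /=].
move=> a b; apply: connect_trans (toL a) _; apply: connect_trans (fromL b).
exact: ll.
Qed.

Lemma inr_simp (T U : finType) (eG : rel T) (eH : rel U) f x u :
  Hf eH f -> simplicial (corona eG eH) (inr (x, u)).
Proof.
move=> hf; apply/forallP => w1; apply/forallP => w2; apply/implyP.
case: w1 => [y1|[y1 u1]]; case: w2 => [y2|[y2 u2]] /=.
- by case/and3P => /eqP <- /eqP <-; rewrite eqxx.
- by case/and3P => /eqP <- /andP[/eqP <- _] _.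
- by case/and3P => /andP[/eqP <- _] /eqP <- _.
- rewrite !hf => /and3P[/and3P[/eqP <- _ /eqP f1] /and3P[/eqP <- _ /eqP f2] ne].
  rewrite eqxx /= -f1 -f2 eqxx andbT.
  by apply: contra ne => /eqP ->.
Qed.

Definition isHx (T U : finType) (x : T) (z : T + T * U) : bool :=
  if z is inr (x', _) then x' == x else false.

Lemma walk_through (T U : finType) (eG : rel T) (eH : rel U) x :
  forall p u, path (corona eG eH) (inr (x, u)) p ->
  ~~ isHx x (last (inr (x, u)) p) ->
  exists q, [/\ path (corona eG eH) (inl x) q, last (inl x) q = last (inr (x, u)) p
                & size q < size p].
Proof.
elim=> [|w p IH] u /=; first by rewrite eqxx.
case: w => [y|[y v]] /= /andP[h pp] hl.
  move/eqP: h => ?; subst y; by exists p.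
case/andP: h => /eqP ? _; subst y.
have [q [pq lq sq]] := IH v pp hl.
by exists q; split => //; apply: ltnW.
Qed.

Lemma key (T U : finType) (eG : rel T) (eH : rel U) f
  (sG : symmetric eG) (cG : forall x y, connect eG x y) (hf : Hf eH f) x u z :
  ~~ isHx x z -> dist (corona eG eH) (inr (x, u)) z = (dist (corona eG eH) (inl x) z).+1.
Proof.
move=> hz; have conn := corona_conn eH cG.
apply/eqP; rewrite eqn_leq; apply/andP; split.
  apply: leq_trans (dist_tri conn _ (inl x) _) _.
  by rewrite -add1n leq_add2r dist_edge //= eqxx.
have [p [pp lp <-]] := dist_walk conn (inr (x, u)) z.
have [q [pq lq sq]] := walk_through pp (ltac:(by rewrite lp)).
by apply: leq_ltn_trans sq; apply: dist_le pq _; rewrite lq.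
Qed.

Lemma geo_A (T U : finType) (eG : rel T) (eH : rel U) f
  (sG : symmetric eG) (cG : forall x y, connect eG x y) (hf : Hf eH f) x u z :
  ~~ isHx x z -> on_common_geodesic (corona eG eH) (inr (x, u)) (inl x) z.
Proof.
move=> hz; have conn := corona_conn eH cG.
have [p [pp lp sp]] := dist_walk conn (inl x) z.
apply: (@on_geo_intro _ _ (inr (x, u)) (inl x :: p)).
- rewrite /geodesic /= eqxx pp /= lp (key sG cG hf u hz) sp //.
- by rewrite inE eqxx.
- by rewrite !inE eqxx orbT.
- by rewrite -lp; have := mem_last (inr (x, u)) (inl x :: p).
Qed.

Lemma geo_B (T U : finType) (eG : rel T) (eH : rel U) f
  (sG : symmetric eG) (cG : forall x y, connect eG x y) (hf : Hf eH f) x u1 u2 :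
  f u1 != f u2 -> on_common_geodesic (corona eG eH) (inr (x, u1)) (inl x) (inr (x, u2)).
Proof.
move=> hne; have conn := corona_conn eH cG.
apply: (@on_geo_intro _ _ (inr (x, u1)) [:: inl x; inr (x, u2)]); last first.
- by rewrite !inE eqxx !orbT.
- by rewrite !inE eqxx !orbT.
- by rewrite !inE eqxx.
rewrite /geodesic /= !eqxx /=.
have h2 : dist (corona eG eH) (inr (x, u1)) (inr (x, u2)) <= 2.
  by apply: (dist_le (p := [:: inl x; inr (x, u2)])); rewrite //= !eqxx.
case d: (dist _ _ _) h2 => [|[|[|n]]] //.
  move/(dist0 conn): d => [E]; by rewrite E eqxx in hne.
move/(dist1 conn): d => /=; rewrite hf => /andP[_ /andP[_ E]].
by rewrite E in hne.
Qed.

Lemma nonsimp_not_maxd (T U : finType) (eG : rel T) (eH : rel U) f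
  (sG : symmetric eG) (cG : forall x y, connect eG x y) (hf : Hf eH f) (u0 : U) a v :
  ~~ simplicial (corona eG eH) a -> v != a -> ~~ max_distant (corona eG eH) a v.
Proof.
have conn := corona_conn eH cG.
have sym := corona_sym sG hf.
case: a => [x|[x u]]; last by rewrite (inr_simp eG x u hf).
move=> ns va; case: (boolP (isHx x v)) => hv.
  case: v hv va => [y|[y u]] //= /eqP ? _; subst y.
  apply: (simp_nbr_nonsimp sym conn (inr_simp eG x u hf)) => //=.
apply/forallPn; exists (inr (x, u0)); rewrite /= eqxx /= -ltnNge.
rewrite [dist _ v _](dist_sym sym conn) (key sG cG hf u0 hv) //.
Qed.

Lemma nonsimp_inl (T U : finType) (eG : rel T) (eH : rel U) f (hf : Hf eH f) x :
  ~~ simplicial (corona eG eH) (inl x) ->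
  (exists y, eG x y) \/ (exists u1 u2, f u1 != f u2).
Proof.
case/nonsimp_witness => w1 [w2 [e1 e2 ne na]].
case: w1 e1 ne na => [y|[y1 v1]] /= e1; first by left; exists y.
case: w2 e2 => [y|[y2 v2]] /= e2; first by left; exists y.
move: e1 e2 => /eqP <- /eqP <- ne; rewrite eqxx /= hf => na.
right; exists v1, v2; apply: contra na => /eqP ->; rewrite eqxx andbT.
by apply: contra ne => /eqP ->.
Qed.

Lemma gp_setP (V : finType) (e : rel V) S a b c :
  gp_set e S -> a \in S -> b \in S -> c \in S -> a != b -> b != c -> a != c ->
  ~~ on_common_geodesic e a b c.
Proof.
move=> /forallP/(_ a)/implyP h ha hb hc ab bc ac.
move: (h ha) => /forallP/(_ b)/implyP/(_ hb)/forallP/(_ c)/implyP/(_ hc)/implyP; apply.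
by rewrite ab bc ac.
Qed.

Lemma caseA (T U : finType) (eG : rel T) (eH : rel U) f
  (sG : symmetric eG) (cG : forall x y, connect eG x y) (hf : Hf eH f) S x u :
  gp_set (corona eG eH) S -> inl x \in S -> inr (x, u) \in S ->
  forall z, z \in S -> z = inl x \/ exists u', z = inr (x, u') /\ f u' = f u.
Proof.
move=> gpS hx hu z hz.
case: (eqVneq z (inl x)) => [->|zx]; first by left.
right; case: (boolP (isHx x z)) => hzx.
  case: z hz zx hzx => [y|[y u']] //= hz _ /eqP ?; subst y.
  exists u'; split => //; apply/eqP; apply/negPn/negP => ne.
  have ne' : f u != f u' by rewrite eq_sym.
  have := geo_B sG cG hf x ne'.
  by apply/negP; apply: (gp_setP gpS) => //; apply/eqP => -[E]; rewrite E eqxx in ne'.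
have := geo_A sG cG hf u hzx.
move=> hg; exfalso; move: hg; apply/negP; apply: (gp_setP gpS) => //; first by rewrite eq_sym.
by apply/eqP => E; rewrite -E /= eqxx in hzx.
Qed.

Definition gmap (T U : finType) (eG : rel T) (eH : rel U) (u0 : U)
  (S : {set T + T * U}) (a : T + T * U) : T + T * U :=
  if simplicial (corona eG eH) a then a else
  match a with
  | inl x => if [exists u, inr (x, u) \in S]
             then odflt a [pick w | simplicial (corona eG eH) w && (w \notin S)]
             else inr (x, u0)
  | inr _ => a
  end.

Lemma gmapP (T U : finType) (eG : rel T) (eH : rel U) f
  (sG : symmetric eG) (iG : irreflexive eG) (cG : forall x y, connect eG x y)
  (hf : Hf eH f) (u0 : U) S a :
  gp_set (corona eG eH) S -> a \in S -> ~~ simplicial (corona eG eH) a ->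
  simplicial (corona eG eH) (gmap eG eH u0 S a) && (gmap eG eH u0 S a \notin S).
Proof.
move=> gpS ha ns; rewrite /gmap (negbTE ns).
case: a ha ns => [x|[x u]] ha ns; last by rewrite (inr_simp eG x u hf) in ns.
case: existsP => [[u hu]|hno]; last first.
  rewrite (inr_simp eG x u0 hf) /=; apply/negP => h; apply: hno; by exists u0.
case: pickP => [w //|none]; exfalso.
have hA := caseA sG cG hf gpS ha hu.
case: (nonsimp_inl hf ns) => [[y exy]|[u1 [u2 ne]]].
  have := none (inr (y, u0)); rewrite (inr_simp eG y u0 hf) /=.
  move/negbT; rewrite negbK => /hA [//|[u' [[E _] _]]].
  by subst y; rewrite iG in exy.
have [u' hu'] : exists u', f u' != f u.
  case: (eqVneq (f u1) (f u)) => [E|]; last by exists u1.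
  by exists u2; rewrite -E eq_sym.
have := none (inr (x, u')); rewrite (inr_simp eG x u' hf) /=.
move/negbT; rewrite negbK => /hA [//|[u'' [[E] F]]].
by subst u''; rewrite F eqxx in hu'.
Qed.

Lemma gp_bound (T U : finType) (eG : rel T) (eH : rel U) f
  (sG : symmetric eG) (iG : irreflexive eG) (cG : forall x y, connect eG x y)
  (hf : Hf eH f) (u0 : U) S :
  gp_set (corona eG eH) S -> #|S| <= #|[set a | simplicial (corona eG eH) a]|.
Proof.
move=> gpS.
have inj : {in S &, injective (gmap eG eH u0 S)}.
  move=> a b ha hb E.
  case: (boolP (simplicial (corona eG eH) a)) => sa;
  case: (boolP (simplicial (corona eG eH) b)) => sb.
  - by move: E; rewrite /gmap sa sb.
  - have ga : gmap eG eH u0 S a = a by rewrite /gmap sa.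
    by have := gmapP sG iG cG hf u0 gpS hb sb; rewrite -E ga ha andbF.
  - have gb : gmap eG eH u0 S b = b by rewrite /gmap sb.
    by have := gmapP sG iG cG hf u0 gpS ha sa; rewrite E gb hb andbF.
  case: a ha sa E => [x|[x u]] ha sa E; last by rewrite (inr_simp eG x u hf) in sa.
  case: b hb sb E => [y|[y u]] hb sb E; last by rewrite (inr_simp eG y u hf) in sb.
  case: (boolP [exists u, inr (x, u) \in S]) => [/existsP[u hu]|hx].
    by case: (caseA sG cG hf gpS ha hu hb) => [->|[u' [E' _]]].
  case: (boolP [exists u, inr (y, u) \in S]) => [/existsP[u hu]|hy].
    by case: (caseA sG cG hf gpS hb hu ha) => [->|[u' [E' _]]].
  by move: E; rewrite /gmap (negbTE sa) (negbTE sb) (negbTE hx) (negbTE hy) => -[->].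
rewrite -(card_in_imset inj); apply: subset_leq_card; apply/subsetP => w /imsetP[a ha ->].
rewrite inE; case: (boolP (simplicial (corona eG eH) a)) => sa; first by rewrite /gmap sa.
by case/andP: (gmapP sG iG cG hf u0 gpS ha sa).
Qed.

Lemma clique_bound (T U : finType) (eG : rel T) (eH : rel U) f
  (sG : symmetric eG) (cG : forall x y, connect eG x y)
  (hf : Hf eH f) (x0 : T) (u0 : U) C :
  is_clique (strong_resolving (corona eG eH)) C ->
  #|C| <= #|[set a | simplicial (corona eG eH) a]|.
Proof.
move=> cl.
case: (boolP (C \subset [set a | simplicial (corona eG eH) a])) => [/subset_leq_card //|].
case/subsetPn => a ha; rewrite inE => na.
have sub : C \subset [set a].
  apply/subsetP => v hv; rewrite inE; apply/negPn/negP => va.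
  move: cl => /forallP/(_ a)/implyP/(_ ha)/forallP/(_ v)/implyP/(_ hv)/implyP.
  rewrite eq_sym va => /(_ isT) /andP[_ /andP[h _]].
  by have := nonsimp_not_maxd sG cG hf u0 na va; rewrite h.
apply: leq_trans (subset_leq_card sub) _; rewrite cards1.
apply/card_gt0P; exists (inr (x0, u0)); by rewrite inE (inr_simp eG x0 u0 hf).
Qed.

Theorem proposition3p2 (T U : finType) (eG : rel T) (eH : rel U) :
  simple_graph eG -> connected_graph eG ->
  disjoint_union_of_complete_graphs eH ->
  gp (corona eG eH) = clique_number (strong_resolving (corona eG eH)).
Proof.
move=> [sG iG] [cardT cG] [cardU [f hf]].
case/card_gt0P: cardT => x0 _; case/card_gt0P: cardU => u0 _.
have hf' : Hf eH f by [].
have sym := corona_sym sG hf'.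
have conn := corona_conn eH cG.
set Ss := [set a | simplicial (corona eG eH) a].
have -> : gp (corona eG eH) = #|Ss|.
  apply/eqP; rewrite eqn_leq; apply/andP; split.
    by apply/bigmax_leqP => S gpS; apply: (gp_bound sG iG cG hf' u0).
  rewrite /gp; apply: (@leq_bigmax_cond _ _ _ Ss).
  apply/forallP => a; apply/implyP => ha; apply/forallP => b; apply/implyP => hb.
  apply/forallP => c; apply/implyP => hc; apply/implyP => d.
  by move: ha hb hc; rewrite !inE => ha hb hc; apply: simp_gp3.
apply/eqP; rewrite eqn_leq; apply/andP; split; last first.
  by apply/bigmax_leqP => C cl; apply: (clique_bound sG cG hf' x0 u0).
rewrite /clique_number; apply: (@leq_bigmax_cond _ _ _ Ss).
apply/forallP => a; apply/implyP => ha; apply/forallP => b; apply/implyP => hb.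
apply/implyP => ab; move: ha hb; rewrite !inE => ha hb.
rewrite /strong_resolving ab /mmd !simp_maxd //; by rewrite eq_sym.
Qed.
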